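(* Let $f(x)=x^5+px^4+qx^3+rx^2+sx+t$ with $p,q,r,s,t\in\mathbb{R}$, and let $D$, $L_3$, $L_2$, $L_1$ be as in the context. Then: (1) $f$ has five distinct real roots if and only if $L_3>0$, $L_2>0$, $L_1>0$ and $D>0$; (2) $f$ has three distinct real roots and a pair of (non-real) complex conjugate roots if and only if $D<0$; (3) $f$ has exactly one real root and four distinct non-real roots (two distinct pairs of complex conjugate roots) if and only if $D>0$ and ($L_3\le 0$ or $L_2\le 0$ or $L_1\le 0$).
   Context: Let $\alpha_1,\dots,\alpha_5\in\mathbb{C}$ be the roots of $f$ listed with multiplicity. $D=\prod_{1\le i<j\le 5}(\alpha_i-\alpha_j)^2$ is the discriminant of $f$ (a polynomial in $p,q,r,s,t$). $L_3=2p^2-5q$. $L_2=40qs-16p^2s-8rp^3+38rpq+3p^2q^2-12q^3-45r^2$. $L_1=-264ps^2r-12p^3tq^2+36r^3pq-124srpq^2+28srp^3q+260sptq-132p^2qrt+240pr^2t+234sqr^2+32p^4tr+48ptq^3-56sp^3t-80q^2rt+194qs^2p^2-600str-6q^3sp^2+2p^2q^2r^2-12sr^2p^2-54r^4+320s^3-8q^3r^2-8r^3p^3+250qt^2-176q^2s^2+24q^4s-36p^4s^2-100p^2t^2$. ($L_3,L_2,L_1$ are, up to positive factors, the leading coefficients of the degree 3, 2, 1 remainders in the Sturm sequence of $f$.) *)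

(* Defs.v *)
From HB Require Import structures.
From mathcomp Require Import all_boot all_order all_algebra.
Set Implicit Arguments. Unset Strict Implicit. Unset Printing Implicit Defensive.
Import Order.TTheory GRing.Theory Num.Theory.
Local Open Scope ring_scope.

Definition quintic (R : nzRingType) (p q r s t : R) : {poly R} :=
  'X^5 + p *: 'X^4 + q *: 'X^3 + r *: 'X^2 + s *: 'X + t%:P.

Definition discr5 (R : nzRingType) (alpha : 'I_5 -> R) : R :=
  \prod_(i < 5) \prod_(j < 5 | (i < j)%N) (alpha i - alpha j) ^+ 2.

Definition L3 (R : nzRingType) (p q : R) : R := 2 * p ^+ 2 - 5 * q.

Definition L2 (R : nzRingType) (p q r s : R) : R :=
  40 * q * s - 16 * p ^+ 2 * s - 8 * r * p ^+ 3 + 38 * r * p * q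
  + 3 * p ^+ 2 * q ^+ 2 - 12 * q ^+ 3 - 45 * r ^+ 2.

Definition L1 (R : nzRingType) (p q r s t : R) : R :=
  - 264 * p * s ^+ 2 * r - 12 * p ^+ 3 * t * q ^+ 2 + 36 * r ^+ 3 * p * q
  - 124 * s * r * p * q ^+ 2 + 28 * s * r * p ^+ 3 * q + 260 * s * p * t * q
  - 132 * p ^+ 2 * q * r * t + 240 * p * r ^+ 2 * t + 234 * s * q * r ^+ 2
  + 32 * p ^+ 4 * t * r + 48 * p * t * q ^+ 3 - 56 * s * p ^+ 3 * t
  - 80 * q ^+ 2 * r * t + 194 * q * s ^+ 2 * p ^+ 2 - 600 * s * t * r
  - 6 * q ^+ 3 * s * p ^+ 2 + 2 * p ^+ 2 * q ^+ 2 * r ^+ 2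
  - 12 * s * r ^+ 2 * p ^+ 2 - 54 * r ^+ 4 + 320 * s ^+ 3
  - 8 * q ^+ 3 * r ^+ 2 - 8 * r ^+ 3 * p ^+ 3 + 250 * q * t ^+ 2
  - 176 * q ^+ 2 * s ^+ 2 + 24 * q ^+ 4 * s - 36 * p ^+ 4 * s ^+ 2
  - 100 * p ^+ 2 * t ^+ 2.

Definition nreal (C : numClosedFieldType) (alpha : 'I_5 -> C) : nat :=
  #|[pred i | alpha i \is Num.real]|.

(* Main.v *)
Require Import Defs.
From HB Require Import structures.
From mathcomp Require Import all_boot all_order all_algebra.
From mathcomp Require Import ring lra zify.
Import Order.TTheory GRing.Theory Num.Theory.
Local Open Scope ring_scope.
Set Implicit Arguments. Unset Strict Implicit.
Definition o0 : 'I_5 := @Ordinal 5 0 isT.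
Definition o1 : 'I_5 := @Ordinal 5 1 isT.
Definition o2 : 'I_5 := @Ordinal 5 2 isT.
Definition o3 : 'I_5 := @Ordinal 5 3 isT.
Definition o4 : 'I_5 := @Ordinal 5 4 isT.

Lemma big5 (R : Type) (idx : R) (op : Monoid.law idx) (F : 'I_5 -> R) :
  \big[op/idx]_(i < 5) F i = op (F o0) (op (F o1) (op (F o2) (op (F o3) (F o4)))).
Proof.
have e : index_enum 'I_5 = [:: o0; o1; o2; o3; o4].
  rewrite -[index_enum _]filter_predT deprecated_filter_index_enum.
  by apply: (inj_map val_inj); rewrite val_enum_ord.
by rewrite e !big_cons big_nil Monoid.mulm1.
Qed.


Definition e1 (C : comNzRingType) (a : 'I_5 -> C) := a o0 + a o1 + a o2 + a o3 + a o4.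
Definition e2 (C : comNzRingType) (a : 'I_5 -> C) :=
  a o0 * a o1 + a o0 * a o2 + a o0 * a o3 + a o0 * a o4 + a o1 * a o2 + a o1 * a o3
  + a o1 * a o4 + a o2 * a o3 + a o2 * a o4 + a o3 * a o4.
Definition e3 (C : comNzRingType) (a : 'I_5 -> C) :=
  a o0 * a o1 * a o2 + a o0 * a o1 * a o3 + a o0 * a o1 * a o4 + a o0 * a o2 * a o3
  + a o0 * a o2 * a o4 + a o0 * a o3 * a o4 + a o1 * a o2 * a o3 + a o1 * a o2 * a o4
  + a o1 * a o3 * a o4 + a o2 * a o3 * a o4.
Definition e4 (C : comNzRingType) (a : 'I_5 -> C) :=
  a o0 * a o1 * a o2 * a o3 + a o0 * a o1 * a o2 * a o4 + a o0 * a o1 * a o3 * a o4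
  + a o0 * a o2 * a o3 * a o4 + a o1 * a o2 * a o3 * a o4.
Definition e5 (C : comNzRingType) (a : 'I_5 -> C) := a o0 * a o1 * a o2 * a o3 * a o4.

Lemma prod_quintic (C : comNzRingType) (a : 'I_5 -> C) :
  \prod_(i < 5) ('X - (a i)%:P) = quintic (- e1 a) (e2 a) (- e3 a) (e4 a) (- e5 a).
Proof. rewrite big5 /= /quintic -!mul_polyC /e1 /e2 /e3 /e4 /e5; ring. Qed.

Lemma coef_quintic (C : nzRingType) (p q r s t : C) :
  [/\ (quintic p q r s t)`_4 = p, (quintic p q r s t)`_3 = q, (quintic p q r s t)`_2 = r,
      (quintic p q r s t)`_1 = s & (quintic p q r s t)`_0 = t].
Proof.
rewrite /quintic !coefD !coefZ !coefXn !coefX !coefC /=.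
split; rewrite ?(mulr0, mulr1, addr0, add0r) //.
Qed.

Lemma vieta (C : comNzRingType) (p q r s t : C) (a : 'I_5 -> C) :
  quintic p q r s t = \prod_(i < 5) ('X - (a i)%:P) ->
  [/\ p = - e1 a, q = e2 a, r = - e3 a, s = e4 a & t = - e5 a].
Proof.
rewrite prod_quintic => h.
have [h4 h3 h2 h1 h0] := coef_quintic p q r s t.
have [g4 g3 g2 g1 g0] := coef_quintic (- e1 a) (e2 a) (- e3 a) (e4 a) (- e5 a).
by split; [rewrite -h4 h g4 | rewrite -h3 h g3 | rewrite -h2 h g2 | rewrite -h1 h g1 | rewrite -h0 h g0].
Qed.

Definition fv (C : nzRingType) (p q r s t z : C) :=
  z ^+ 5 + p * z ^+ 4 + q * z ^+ 3 + r * z ^+ 2 + s * z + t.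

Lemma horner_quintic (C : comNzRingType) (p q r s t z : C) :
  (quintic p q r s t).[z] = fv p q r s t z.
Proof. by rewrite /quintic /fv !hornerE. Qed.

Lemma fv_prod (C : comNzRingType) (p q r s t : C) (a : 'I_5 -> C) :
  quintic p q r s t = \prod_(i < 5) ('X - (a i)%:P) ->
  forall z, fv p q r s t z = \prod_(i < 5) (z - a i).
Proof.
move=> h z; rewrite -horner_quintic h horner_prod; apply: eq_bigr => i _.
by rewrite hornerXsubC.
Qed.

Lemma fv_root (C : comNzRingType) (p q r s t : C) (a : 'I_5 -> C) :
  quintic p q r s t = \prod_(i < 5) ('X - (a i)%:P) ->
  forall i, fv p q r s t (a i) = 0.
Proof.
move=> h i; rewrite (fv_prod h) (bigD1 i) //= subrr mul0r //.
Qed.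

Definition pw (C : nzRingType) (a : 'I_5 -> C) (k : nat) := \sum_(i < 5) a i ^+ k.

Lemma newton (C : comNzRingType) (p q r s t : C) (a : 'I_5 -> C) :
  quintic p q r s t = \prod_(i < 5) ('X - (a i)%:P) ->
  [/\ pw a 0 = 5, pw a 1 = - p, pw a 2 = - (p * pw a 1) - 2 * q,
      pw a 3 = - (p * pw a 2 + q * pw a 1) - 3 * r
    & pw a 4 = - (p * pw a 3 + q * pw a 2 + r * pw a 1) - 4 * s].
Proof.
move=> h; have [-> -> -> -> _] := vieta h.
by rewrite /pw !big5 /= /e1 /e2 /e3 /e4; split; ring.
Qed.

Lemma newton_rec (C : comNzRingType) (p q r s t : C) (a : 'I_5 -> C) :
  quintic p q r s t = \prod_(i < 5) ('X - (a i)%:P) ->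
  forall k, pw a (k + 5) = - (p * pw a (k + 4) + q * pw a (k + 3) + r * pw a (k + 2)
                               + s * pw a (k + 1) + t * pw a k).
Proof.
move=> h k.
have r5 : forall i, a i ^+ 5 = - (p * a i ^+ 4 + q * a i ^+ 3 + r * a i ^+ 2 + s * a i + t).
  move=> i; have := fv_root h i; rewrite /fv => e.
  by apply/eqP; rewrite -subr_eq0 opprK; apply/eqP; rewrite -e; ring.
rewrite /pw !big5 /= !exprD !r5; ring.
Qed.

Lemma pw_real (C : numClosedFieldType) (p q r s t : C) (a : 'I_5 -> C) :
  p \is Num.real -> q \is Num.real -> r \is Num.real ->
  s \is Num.real -> t \is Num.real ->
  quintic p q r s t = \prod_(i < 5) ('X - (a i)%:P) ->
  forall k, pw a k \is Num.real.
Proof.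
move=> hp hq hr hs ht h.
have [n0 n1 n2 n3 n4] := newton h.
have base : forall j, (j < 5)%N -> pw a j \is Num.real.
  have r1 : pw a 1 \is Num.real by rewrite n1 rpredN.
  have r2 : pw a 2 \is Num.real by rewrite n2 rpredB ?rpredN ?rpredM ?rpred_nat.
  have r3 : pw a 3 \is Num.real by rewrite n3 rpredB ?rpredN ?rpredD ?rpredM ?rpred_nat.
  have r4 : pw a 4 \is Num.real by rewrite n4 rpredB ?rpredN ?rpredD ?rpredM ?rpred_nat.
  by case=> [|[|[|[|[|j]]]]] // _; rewrite n0 rpred_nat.
suff H : forall k j, (j < 5 + k)%N -> pw a j \is Num.real.
  by move=> k; apply: (H k k); lia.
elim=> [|k IH] j hj; first by apply: base; rewrite addn0 in hj.
case: (ltnP j (5 + k)) => hjk; first exact: IH.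
have -> : j = (k + 5)%N by lia.
rewrite (newton_rec h) rpredN //.
by rewrite !rpredD ?rpredM //; apply: IH; lia.
Qed.

Definition hank (C : nzRingType) (a : 'I_5 -> C) : nat -> nat -> C :=
  fun i j => pw a (Nat.add i j).
Definition bmp (j k : nat) : nat := if Nat.leb j k then k.+1 else k.
Fixpoint detf {R : nzRingType} (n : nat) (m : nat -> nat -> R) : R :=
  if n is n'.+1 then \sum_(j <- iota 0 n) (-1)^+j * m 0%N j * detf n' (fun i k => m i.+1 (bmp j k)) else 1.
Definition elimm {R : fieldType} (m : nat -> nat -> R) : nat -> nat -> R :=
  fun i j => m i.+1 j.+1 - m i.+1 0%N * m 0%N j.+1 / m 0%N 0%N.
Lemma detH (C : comNzRingType) (p q r s t : C) (a : 'I_5 -> C) :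
  quintic p q r s t = \prod_(i < 5) ('X - (a i)%:P) ->
  [/\ detf 2 (hank a) = 2 * L3 p q, detf 3 (hank a) = L2 p q r s
    & detf 4 (hank a) = L1 p q r s t].
Proof.
move=> h; have [n0 n1 n2 n3 n4] := newton h.
have n5 : pw a 5 = - (p * pw a 4 + q * pw a 3 + r * pw a 2 + s * pw a 1 + t * pw a 0)
  := newton_rec h 0.
have n6 : pw a 6 = - (p * pw a 5 + q * pw a 4 + r * pw a 3 + s * pw a 2 + t * pw a 1)
  := newton_rec h 1.
rewrite /= unlock /bmp /hank /=.
rewrite n6 n5 n4 n3 n2 n1 n0 /L3 /L2 /L1.
split; [ring | ring | ring].
Qed.

Lemma lebE j k : Nat.leb j k = (j <= k)%N.
Proof. by elim: j k => [|j IH] [|k] //; exact: IH. Qed.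

Lemma bumpE j k : bump j k = bmp j k.
Proof. by rewrite /bump /bmp lebE; case: (j <= k)%N. Qed.

Lemma detfE (R : comNzRingType) n (m : nat -> nat -> R) :
  \det (\matrix_(i < n, j < n) m i j) = detf n m.
Proof.
elim: n m => [|n IH] m; first by rewrite det_mx00.
rewrite (expand_det_row _ ord0).
change (detf n.+1 m) with (\sum_(j <- index_iota 0 n.+1)
   (-1)^+j * m 0%N j * detf n (fun i k => m i.+1 (bmp j k))).
rewrite big_mkord.
apply: eq_bigr => j _; rewrite mxE /cofactor.
have -> : row' ord0 (col' j (\matrix_(i < n.+1, j < n.+1) m i j)) =
          \matrix_(i < n, k < n) m i.+1 (bmp j k).
  by apply/matrixP => i k; rewrite !mxE /= !bumpE {1}/bmp.
by rewrite (IH (fun i k => m i.+1 (bmp j k))) add0n mulrA [m _ _ * _]mulrC.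
Qed.

Definition pv (C : nzRingType) (x : nat -> C) (z : C) :=
  x 0%N + x 1%N * z + x 2%N * z ^+ 2 + x 3%N * z ^+ 3 + x 4%N * z ^+ 4.

Definition qf {R : nzRingType} (n : nat) (m : nat -> nat -> R) (x : nat -> R) : R :=
  \sum_(i <- iota 0 n) \sum_(j <- iota 0 n) x i * x j * m i j.

Lemma qf_hank (C : comNzRingType) (a : 'I_5 -> C) x :
  qf 5 (hank a) x = \sum_(i < 5) (pv x (a i)) ^+ 2.
Proof. rewrite big5 /qf unlock /hank /= /pw !big5 /= /pv; ring. Qed.

Lemma detH5 (C : comNzRingType) (a : 'I_5 -> C) :
  detf 5 (hank a) = discr5 a.
Proof.
rewrite -detfE.
pose v : 'rV[C]_5 := \row_j a j.
have -> : \matrix_(i < 5, j < 5) hank a i j = Vandermonde 5 v *m (Vandermonde 5 v)^T.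
  apply/matrixP => i j; rewrite !mxE /hank /pw; apply: eq_bigr => k _.
  by rewrite !mxE -exprD plusE.
rewrite det_mulmx det_tr det_Vandermonde /discr5 -expr2 -prodrXl.
apply: eq_bigr => i _; rewrite -prodrXl; apply: eq_bigr => j _.
by rewrite !mxE -sqrrN opprB.
Qed.

Lemma big5c (R : Type) (idx : R) (op : Monoid.law idx) (P : pred 'I_5) (F : 'I_5 -> R) :
  \big[op/idx]_(i < 5 | P i) F i =
  op (if P o0 then F o0 else idx) (op (if P o1 then F o1 else idx)
    (op (if P o2 then F o2 else idx) (op (if P o3 then F o3 else idx)
      (if P o4 then F o4 else idx)))).
Proof. by rewrite big_mkcond big5. Qed.

Definition wv (C : nzRingType) (a : 'I_5 -> C) (i : 'I_5) := \prod_(j < 5 | j != i) (a i - a j).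

Lemma discr_w (C : comNzRingType) (a : 'I_5 -> C) : discr5 a = \prod_(i < 5) wv a i.
Proof.
rewrite /discr5 /wv big5 /= !big5c /=; ring.
Qed.

Lemma conj_fv (C : numClosedFieldType) (p q r s t : C) z :
  p \is Num.real -> q \is Num.real -> r \is Num.real ->
  s \is Num.real -> t \is Num.real ->
  fv p q r s t z^* = (fv p q r s t z)^*.
Proof.
move=> hp hq hr hs ht.
rewrite /fv !rmorphD rmorphXn rmorphM rmorphXn rmorphM rmorphXn rmorphM rmorphXn rmorphM.
by rewrite /= (conj_Creal hp) (conj_Creal hq) (conj_Creal hr) (conj_Creal hs) (conj_Creal ht).
Qed.

Lemma conj_root (C : numClosedFieldType) (p q r s t : C) (a : 'I_5 -> C) :
  p \is Num.real -> q \is Num.real -> r \is Num.real ->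
  s \is Num.real -> t \is Num.real ->
  quintic p q r s t = \prod_(i < 5) ('X - (a i)%:P) ->
  forall i, exists j, a j = (a i)^*.
Proof.
move=> hp hq hr hs ht h i.
have : fv p q r s t (a i)^* == 0 by rewrite conj_fv // fv_root // rmorph0.
rewrite (fv_prod h) prodf_seq_eq0 => /hasP [j _ /= /eqP e].
by exists j; apply/eqP; rewrite eq_sym -subr_eq0 e.
Qed.

Definition sig (C : numClosedFieldType) (a : 'I_5 -> C) (i : 'I_5) : 'I_5 :=
  odflt i [pick j | a j == (a i)^*].

Lemma sigP (C : numClosedFieldType) (a : 'I_5 -> C) :
  (forall i, exists j, a j = (a i)^*) -> forall i, a (sig a i) = (a i)^*.
Proof.
move=> hc i; rewrite /sig; case: pickP => [j /eqP // | hn].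
by have [j hj] := hc i; have := hn j; rewrite hj eqxx.
Qed.

Lemma sigK (C : numClosedFieldType) (a : 'I_5 -> C) :
  (forall i, exists j, a j = (a i)^*) -> injective a -> involutive (sig a).
Proof. by move=> hc ha i; apply: ha; rewrite !(sigP hc) conjCK. Qed.

Lemma sig_fix (C : numClosedFieldType) (a : 'I_5 -> C) :
  (forall i, exists j, a j = (a i)^*) -> injective a ->
  forall i, (sig a i == i) = (a i \is Num.real).
Proof.
move=> hc ha i; rewrite CrealE -(sigP hc).
by apply/eqP/eqP => [-> // | /ha].
Qed.

Lemma normsq_gt0 (C : numClosedFieldType) (x : C) : x != 0 -> 0 < x * x^*.
Proof. by move=> hx; rewrite -normCK exprn_gt0 // normr_gt0. Qed.

Lemma prod_pairs (C : numClosedFieldType) (a : 'I_5 -> C) (F : 'I_5 -> C) :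
  (forall i, exists j, a j = (a i)^*) -> injective a ->
  (forall i, F (sig a i) = (F i)^*) ->
  \prod_(i < 5 | sig a i != i) F i = \prod_(i < 5 | (i < sig a i)%N) (F i * (F i)^*).
Proof.
move=> hc ha hF.
have sK := sigK hc ha.
rewrite (bigID (fun i : 'I_5 => (i < sig a i)%N)) /= big_split /=.
congr (_ * _).
  apply: eq_bigl => i; case: (ltngtP i (sig a i)) => h; rewrite ?andbT ?andbF //.
  by apply/eqP => e; move: h; rewrite e ltnn.
rewrite (reindex_inj (can_inj sK)) /=.
apply: eq_big => [i | i _]; last by rewrite hF.
rewrite sK; case: (ltngtP i (sig a i)) => h; rewrite ?andbT ?andbF //=.
- by apply/eqP => e; move: h; rewrite -e ltnn.
- by apply/negbTE; rewrite negbK; apply/eqP/val_inj.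
Qed.

Lemma conj_w (C : numClosedFieldType) (a : 'I_5 -> C) :
  (forall i, exists j, a j = (a i)^*) -> injective a ->
  forall i, wv a (sig a i) = (wv a i)^*.
Proof.
move=> hc ha i; have sK := sigK hc ha.
rewrite /wv rmorph_prod (reindex_inj (can_inj sK)) /=.
apply: eq_big => [j | j _]; first by rewrite (inj_eq (can_inj sK)).
by rewrite rmorphB /= !(sigP hc).
Qed.

Lemma wv_neq0 (C : numClosedFieldType) (a : 'I_5 -> C) :
  injective a -> forall i, wv a i != 0.
Proof.
move=> ha i; apply/prodf_neq0 => j hj; rewrite subr_eq0; apply/eqP => /ha e.
by rewrite e eqxx in hj.
Qed.

Definition Tfix (C : numClosedFieldType) (a : 'I_5 -> C) :=
  \prod_(i < 5 | sig a i == i) \prod_(j < 5 | (j != i) && (sig a j == j)) (a i - a j).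

Lemma discr_decomp (C : numClosedFieldType) (a : 'I_5 -> C) :
  (forall i, exists j, a j = (a i)^*) -> injective a ->
  exists2 P, 0 < P & discr5 a = Tfix a * P.
Proof.
move=> hc ha; have sK := sigK hc ha.
rewrite discr_w (bigID (fun i => sig a i == i)) /=.
rewrite (prod_pairs hc ha (conj_w hc ha)).
have e1 : forall i, sig a i == i -> wv a i =
   (\prod_(j < 5 | (j != i) && (sig a j == j)) (a i - a j)) *
   \prod_(j < 5 | (j < sig a j)%N) ((a i - a j) * (a i - a j)^*).
  move=> i hi; rewrite /wv (bigID (fun j => sig a j == j)) /=; congr (_ * _).
  rewrite -(prod_pairs hc ha (F := fun j => a i - a j)).
    apply: eq_bigl => j; case: eqP => [e|] //=; rewrite ?andbT //.
    by rewrite e (eqP hi) eqxx.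
  move=> j; rewrite rmorphB /= (sigP hc); congr (_ - _).
  by apply/esym/conj_Creal; rewrite -(sig_fix hc ha).
rewrite (eq_bigr _ e1) big_split /= -mulrA.
eexists; last reflexivity.
apply: mulr_gt0; apply: prodr_gt0 => i hi.
  apply: prodr_gt0 => j hj; apply: normsq_gt0; rewrite subr_eq0; apply/eqP => /ha e.
  by move: hj; rewrite -e (eqP hi) ltnn.
exact/normsq_gt0/wv_neq0.
Qed.

Lemma nreal_sig (C : numClosedFieldType) (a : 'I_5 -> C) :
  (forall i, exists j, a j = (a i)^*) -> injective a ->
  nreal a = #|[pred i | sig a i == i]|.
Proof. by move=> hc ha; apply: eq_card => i; rewrite !inE (sig_fix hc ha). Qed.

Lemma fix_odd (C : numClosedFieldType) (a : 'I_5 -> C) :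
  (forall i, exists j, a j = (a i)^*) -> injective a ->
  odd #|[pred i | sig a i == i]|.
Proof.
move=> hc ha; have sK := sigK hc ha.
set Fs := [set i | sig a i == i].
set P := [set i : 'I_5 | (i < sig a i)%N].
set N := [set i : 'I_5 | (sig a i < i)%N].
have -> : #|[pred i | sig a i == i]| = #|Fs| by rewrite cardsE.
have hC : ~: Fs = P :|: N.
  apply/setP => i; rewrite !inE; case: (ltngtP i (sig a i)) => h //=.
  - by apply/eqP => e; move: h; rewrite e ltnn.
  - by apply/eqP => e; move: h; rewrite e ltnn.
  - by rewrite (_ : sig a i = i) ?eqxx //; apply/val_inj; rewrite /= -h.
have hPN : P :&: N = set0.
  apply/setP => i; rewrite !inE; apply/negP => /andP [h1 h2].
  by have := ltn_trans h1 h2; rewrite ltnn.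
have hN : N = sig a @: P.
  apply/setP => i; rewrite !inE; apply/idP/imsetP => [h | [j hj ->]].
    by exists (sig a i); rewrite ?inE sK.
  by move: hj; rewrite inE sK.
have := cardsC Fs; rewrite hC cardsU hPN cards0 subn0 hN card_imset ?(can_inj sK) //.
rewrite card_ord => e.
have : odd (#|Fs| + (#|P| + #|P|)) by rewrite e.
by rewrite oddD addnn odd_double addbF.
exact: (can_inj sK).
Qed.

Lemma Tfix_enum (C : numClosedFieldType) (a : 'I_5 -> C) :
  Tfix a = \prod_(i <- enum [pred i | sig a i == i])
             \prod_(j <- enum [pred i | sig a i == i] | j != i) (a i - a j).
Proof.
rewrite /Tfix big_enum /=; apply: eq_big => [i | i _]; first by rewrite inE.
by rewrite big_enum_cond /=; apply: eq_bigl => j; rewrite inE andbC.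
Qed.

Lemma Tfix1 (C : numClosedFieldType) (a : 'I_5 -> C) :
  #|[pred i | sig a i == i]| = 1%N -> Tfix a = 1.
Proof.
rewrite Tfix_enum cardE; case: (enum _) => [|x [|y l]] //= _.
by rewrite !big_cons !big_nil eqxx /= mulr1.
Qed.

Lemma Tfix3 (C : numClosedFieldType) (a : 'I_5 -> C) :
  (forall i, exists j, a j = (a i)^*) -> injective a ->
  #|[pred i | sig a i == i]| = 3%N -> Tfix a < 0.
Proof.
move=> hc ha; rewrite Tfix_enum cardE.
have hu := enum_uniq [pred i | sig a i == i].
have hm := mem_enum [pred i | sig a i == i].
case: (enum _) hu hm => [|x [|y [|z [|w l]]]] //= hu hm _.
move: hu; rewrite !inE !negb_or => /and3P [/andP [hxy hxz] hyz _].
have hr : forall u, u \in [:: x; y; z] -> a u \is Num.real.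
  by move=> u; rewrite hm inE (sig_fix hc ha).
have rx := hr x; have ry := hr y; have rz := hr z.
rewrite !inE !eqxx ?orbT in rx ry rz.
have rx' := rx isT; have ry' := ry isT; have rz' := rz isT.
have hyx : (y != x) by rewrite eq_sym.
have hzx : (z != x) by rewrite eq_sym.
have hzy : (z != y) by rewrite eq_sym.
rewrite !big_cons !big_nil !eqxx /= hxy hxz hyz hyx hzx hzy /=.
set G := (a x - a y) * (a x - a z) * (a y - a z).
have -> : (a x - a y) * ((a x - a z) * 1) * ((a y - a x) * ((a y - a z) * 1) *
   ((a z - a x) * ((a z - a y) * 1) * 1)) = - G ^+ 2 by rewrite /G; ring.
rewrite oppr_lt0 lt_def.
have hG : G != 0.
  rewrite /G !mulf_neq0 // subr_eq0; apply/eqP => /ha /eqP; by apply/negP.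
rewrite sqrf_eq0 hG /=.
by apply: real_exprn_even_ge0 => //; rewrite /G !rpredM ?rpredB.
Qed.

Ltac realt := repeat first [assumption | apply: rpredB | apply: rpredM | apply: rpredD
  | apply: rpredN | apply: rpredV | apply: rpred1 | apply: rpred0].

Lemma conj_cubic (C : numClosedFieldType) (g2 g1 g0 z : C) :
  g2 \is Num.real -> g1 \is Num.real -> g0 \is Num.real ->
  (z ^+ 3 + g2 * z ^+ 2 + g1 * z + g0)^* = z^* ^+ 3 + g2 * z^* ^+ 2 + g1 * z^* + g0.
Proof.
move=> h2 h1 h0.
rewrite !rmorphD rmorphXn rmorphM rmorphXn rmorphM.
by rewrite /= (conj_Creal h2) (conj_Creal h1) (conj_Creal h0).
Qed.

Lemma hermite_neg (C : numClosedFieldType) (p q r s t : C) (a : 'I_5 -> C) :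
  p \is Num.real -> q \is Num.real -> r \is Num.real ->
  s \is Num.real -> t \is Num.real ->
  quintic p q r s t = \prod_(i < 5) ('X - (a i)%:P) -> injective a ->
  forall i0, a i0 \isn't Num.real ->
  exists2 x : nat -> C, (forall k, x k \is Num.real) & qf 5 (hank a) x < 0.
Proof.
move=> hp hq hr hs ht h ha i0 hnr.
have hc := conj_root hp hq hr hs ht h.
set g := a i0.
have [j0 hj0] := hc i0; rewrite -/g in hj0.
have hgg : g - g^* != 0.
  by rewrite subr_eq0; apply: contra hnr => /eqP e; rewrite CrealE -/g -e.
have hij : (j0 != i0).
  by apply/eqP => e; move: hgg; rewrite -hj0 e subrr eqxx.
set b := - (g + g^*).
set c := g * g^*.
have rb : b \is Num.real by apply/CrealP; rewrite /b rmorphN rmorphD /= conjCK addrC.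
have rc : c \is Num.real by apply/CrealP; rewrite /c rmorphM /= conjCK mulrC.
set g2 := p - b.
set g1 := q - b * g2 - c.
set g0 := r - b * g1 - c * g2.
set a1 := s - b * g0 - c * g1.
set a0 := t - c * g0.
have r2 : g2 \is Num.real by rewrite /g2 rpredB.
have r1 : g1 \is Num.real by rewrite /g1; realt.
have r0 : g0 \is Num.real by rewrite /g0; realt.
set Gp : {poly C} := 'X^3 + g2%:P * 'X^2 + g1%:P * 'X + g0%:P.
have hGp : forall z, Gp.[z] = z ^+ 3 + g2 * z ^+ 2 + g1 * z + g0.
  by move=> z; rewrite /Gp !hornerE.
have fdec : forall z, fv p q r s t z = (z - g) * (z - g^*) * Gp.[z] + a1 * z + a0.
  by move=> z; rewrite hGp /fv /a1 /a0 /g0 /g1 /g2 /b /c; ring.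
have e1 : a1 * g + a0 = 0.
  by have := fv_root h i0; rewrite fdec -/g subrr !mul0r add0r.
have e2 : a1 * g^* + a0 = 0.
  by have := fv_root h j0; rewrite fdec hj0 subrr mulr0 mul0r add0r.
have ha1 : a1 = 0.
  have E : a1 * (g - g^*) = (a1 * g + a0) - (a1 * g^* + a0) by ring.
  have : a1 * (g - g^*) = 0 by rewrite E e1 e2 subrr.
  by move/eqP; rewrite mulf_eq0 (negbTE hgg) orbF => /eqP.
have ha0 : a0 = 0 by move: e1; rewrite ha1 mul0r add0r.
have hq1 : quintic p q r s t = (('X - g%:P) * ('X - g^*%:P)) * Gp.
  have E : quintic p q r s t = (('X - g%:P) * ('X - g^*%:P)) * Gp + (a1%:P * 'X + a0%:P).
    rewrite /quintic -!mul_polyC /Gp /a1 /a0 /g0 /g1 /g2 /b /c; ring.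
  by rewrite E ha1 ha0 mul0r add0r addr0.
have hq2 : quintic p q r s t = ('X - g%:P) * (('X - g^*%:P) *
      \prod_(l < 5 | (l != i0) && (l != j0)) ('X - (a l)%:P)).
  by rewrite h (bigD1 i0) // (bigD1 j0) //= hj0.
have hnz : ('X - g%:P) * ('X - g^*%:P) != 0 by rewrite mulf_neq0 ?polyXsubC_eq0.
have GpRp : Gp = \prod_(l < 5 | (l != i0) && (l != j0)) ('X - (a l)%:P).
  by apply: (mulfI hnz); rewrite -hq1 hq2 mulrA.
set y := Gp.[g].
have hy : y != 0.
  rewrite /y GpRp horner_prod; apply/prodf_neq0 => l /andP [hl1 hl2].
  rewrite hornerXsubC subr_eq0; apply/eqP => /ha e.
  by move: hl1; rewrite e eqxx.
have hz : forall l, l != i0 -> l != j0 -> Gp.[a l] = 0.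
  move=> l hl1 hl2; rewrite GpRp horner_prod (bigD1 l) /=; last by rewrite hl1 hl2.
  by rewrite hornerXsubC subrr mul0r.
set z0 := 'i * y^*.
set v := (z0 - z0^*) / (g - g^*).
set w := z0 - v * g.
have hv : v * (g - g^*) = z0 - z0^* by rewrite /v divfK.
have rv : v \is Num.real.
  apply/CrealP; rewrite /v rmorphM fmorphV !rmorphB /= !conjCK.
  by rewrite -[z0^* - z0]opprB -[g^* - g]opprB invrN mulrNN.
have rw : w \is Num.real.
  apply/CrealP; rewrite /w rmorphB /= [(v * g)^*]rmorphM /= (conj_Creal rv).
  apply/eqP; rewrite -subr_eq0.
  have -> : z0^* - v * g^* - (z0 - v * g) = v * (g - g^*) - (z0 - z0^*) by ring.
  by rewrite hv subrr.
pose x := fun k : nat => match k with 0 => w * g0 | 1 => v * g0 + w * g1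
   | 2 => v * g1 + w * g2 | 3 => v * g2 + w | 4 => v | _ => 0 end.
have pvx : forall z, pv x z = (v * z + w) * Gp.[z] by move=> z; rewrite hGp /pv /=; ring.
exists x.
  by case=> [|[|[|[|[|k]]]]] /=; realt.
rewrite qf_hank (bigD1 i0) // (bigD1 j0) //= big1 => [|l /andP [hl1 hl2]]; last first.
  by rewrite pvx hz // mulr0 expr2 mul0r.
rewrite !pvx -/g hj0 -/y.
have -> : v * g + w = z0 by rewrite /w; ring.
have -> : v * g^* + w = z0^*.
  have E : v * g^* + w = z0 - v * (g - g^*) by rewrite /w; ring.
  by rewrite E hv; ring.
have -> : Gp.[g^*] = y^* by rewrite /y !hGp conj_cubic.
have -> : (z0 * y) ^+ 2 + ((z0^* * y^*) ^+ 2 + 0) = 'i ^+ 2 * (2 * (y * y^*) ^+ 2).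
  by rewrite /z0 rmorphM /= conjCi conjCK; ring.
rewrite sqrCi mulN1r oppr_lt0 mulr_gt0 // ?ltr0n // exprn_gt0 //.
exact: normsq_gt0.
Qed.

Lemma real_pd (C : numClosedFieldType) (a : 'I_5 -> C) :
  injective a -> (forall i, a i \is Num.real) ->
  forall x, (forall k, x k \is Num.real) -> (exists2 i, (i < 5)%N & x i != 0) ->
  0 < qf 5 (hank a) x.
Proof.
move=> ha har x hx [i0 hi0 hxi].
have hge : forall l : 'I_5, true -> 0 <= pv x (a l) ^+ 2.
  move=> l _; apply: real_exprn_even_ge0 => //.
  by rewrite /pv; repeat first [apply: rpredD | apply: rpredM | apply: rpredX | apply: hx | apply: har].
rewrite qf_hank lt_def sumr_ge0 ?andbT //.
apply/negP => /eqP h0.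
have hz : forall l : 'I_5, pv x (a l) = 0.
  by move=> l; apply/eqP; rewrite -sqrf_eq0; apply/eqP; apply: (psumr_eq0P hge h0).
pose V := Vandermonde 5 (\row_j a j).
pose X : 'rV[C]_5 := \row_k x k.
have hXV : X *m V = 0.
  apply/rowP => l; rewrite [RHS]mxE -(hz l) !mxE big5 /= !mxE /= /pv; ring.
have hV : V \in unitmx.
  rewrite unitmxE unitfE /V det_Vandermonde; apply/prodf_neq0 => i _.
  apply/prodf_neq0 => j hij; rewrite !mxE subr_eq0; apply/eqP => /ha e.
  by move: hij; rewrite e ltnn.
have hX : X = 0 by rewrite -(mulmxK hV X) hXV mul0mx.
move: hxi; have := congr1 (fun M : 'rV[C]_5 => M 0 (Ordinal hi0)) hX.
by rewrite !mxE => ->; rewrite eqxx.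
Qed.

Lemma discr_inj (C : numClosedFieldType) (a : 'I_5 -> C) :
  discr5 a != 0 -> injective a.
Proof.
move=> hD i j e; apply/val_inj/eqP; apply/negPn/negP => hne.
move/prodf_neq0: hD => hD.
wlog lij : i j e hne / (i < j)%N.
  move=> W; case: (ltngtP i j) => h; first exact: W h.
  - by apply: (W j i) => //; rewrite eq_sym.
  - by move: hne; rewrite (val_inj h) eqxx.
by have /prodf_neq0 /(_ j lij) := hD i isT; rewrite e subrr expr2 mul0r eqxx.
Qed.

Lemma inj_discr (C : numClosedFieldType) (a : 'I_5 -> C) :
  injective a -> discr5 a != 0.
Proof.
move=> ha; apply/prodf_neq0 => i _; apply/prodf_neq0 => j hij.
rewrite sqrf_eq0 subr_eq0; apply/eqP => /ha e.
by move: hij; rewrite e ltnn.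
Qed.

Lemma allreal_discr (C : numClosedFieldType) (a : 'I_5 -> C) :
  injective a -> (forall i, a i \is Num.real) -> 0 < discr5 a.
Proof.
move=> ha hr; apply: prodr_gt0 => i _; apply: prodr_gt0 => j hij.
rewrite lt_def sqrf_eq0 subr_eq0 real_exprn_even_ge0 ?rpredB ?andbT //.
by apply/eqP => /ha e; move: hij; rewrite e ltnn.
Qed.

Lemma nreal5 (C : numClosedFieldType) (a : 'I_5 -> C) :
  nreal a = 5%N -> forall i, a i \is Num.real.
Proof.
move=> h i; have := cardC [pred i | a i \is Num.real].
rewrite -/(nreal a) h card_ord => e.
have := addnI (etrans e (esym (addn0 5%N))).
move=> /card0_eq /(_ i).
by rewrite !inE => /negbFE.
Qed.

Lemma allreal_nreal (C : numClosedFieldType) (a : 'I_5 -> C) :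
  (forall i, a i \is Num.real) -> nreal a = 5%N.
Proof.
move=> h; rewrite /nreal (eq_card (B := 'I_5)) ?card_ord // => i; rewrite !inE h.
Qed.

Lemma detf_elim (F : fieldType) k (m : nat -> nat -> F) : (k <= 4)%N -> m 0%N 0%N != 0 ->
  detf k.+1 m = m 0%N 0%N * detf k (elimm m).
Proof.
move=> hk h0; case: k hk => [|[|[|[|[|k]]]]] // _; rewrite /= unlock /bmp /elimm /=.
- ring.
- by field.
- by field.
- by field.
- by field.
Qed.

Lemma detf1 (R : nzRingType) (m : nat -> nat -> R) : detf 1 m = m 0%N 0%N.
Proof. by rewrite /= unlock /= expr0 mul1r mulr1 addr0. Qed.

Lemma qf_dec (F : fieldType) n (m : nat -> nat -> F) x : (n <= 4)%N ->
  (forall i j, m i j = m j i) -> m 0%N 0%N != 0 ->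
  qf n.+1 m x = m 0%N 0%N * (x 0%N + (\sum_(j <- iota 0 n) m 0%N j.+1 * x j.+1) / m 0%N 0%N) ^+ 2
     + qf n (elimm m) (fun i => x i.+1).
Proof.
move=> hn hs h0; case: n hn => [|[|[|[|[|n]]]]] // _; rewrite /qf /= unlock /elimm /=;
  rewrite ?[m 1%N 0%N]hs ?[m 2%N 0%N]hs ?[m 3%N 0%N]hs ?[m 4%N 0%N]hs; by field.
Qed.

Lemma elimm_sym (F : fieldType) (m : nat -> nat -> F) :
  (forall i j, m i j = m j i) -> forall i j, elimm m i j = elimm m j i.
Proof. by move=> hs i j; rewrite /elimm (hs i.+1 j.+1) (hs i.+1 0%N) (hs j.+1 0%N); ring. Qed.

Lemma elimm_real (F : numFieldType) (m : nat -> nat -> F) :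
  (forall i j, m i j \is Num.real) -> forall i j, elimm m i j \is Num.real.
Proof. by move=> hr i j; rewrite /elimm rpredB ?rpredM ?rpredV. Qed.

Lemma sylv (F : numFieldType) n (m : nat -> nat -> F) x : (n <= 5)%N ->
  (forall i j, m i j \is Num.real) -> (forall i j, m i j = m j i) ->
  (forall k, (0 < k <= n)%N -> 0 < detf k m) -> (forall i, x i \is Num.real) ->
  0 <= qf n m x.
Proof.
elim: n m x => [|n IH] m x hn hr hs hd hx; first by rewrite /qf /= unlock.
have ha : 0 < m 0%N 0%N by rewrite -detf1; apply: hd.
rewrite qf_dec // ?lt0r_neq0 //.
apply: addr_ge0.
  apply: mulr_ge0; first exact: ltW.
  apply: real_exprn_even_ge0 => //.
  rewrite rpredD ?rpredM ?rpredV //; apply: rpred_sum => j _; exact: rpredM.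
apply: (IH (elimm m) (fun i => x i.+1)).
- exact: ltnW.
- exact: elimm_real.
- exact: elimm_sym.
- move=> k /andP [hk0 hkn].
have hk4 : (k <= 4)%N by apply: leq_trans hkn _.
have h : 0 < detf k.+1 m by apply: hd; rewrite /= ltnS.
  move: h; rewrite (detf_elim hk4) ?lt0r_neq0 // => h.
  by rewrite -(pmulr_rgt0 _ ha).
- by move=> i.
Qed.

Lemma qf_e0 (R : nzRingType) n (m : nat -> nat -> R) : (n <= 4)%N ->
  qf n.+1 m (fun i => if i is 0%N then 1 else 0) = m 0%N 0%N.
Proof.
by case: n => [|[|[|[|[|n]]]]] // _; rewrite /qf /= unlock /=;
  rewrite ?(mul0r, mulr0, mul1r, add0r, addr0).
Qed.

Lemma sylv_conv (F : numFieldType) n (m : nat -> nat -> F) : (n <= 5)%N ->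
  (forall i j, m i j \is Num.real) -> (forall i j, m i j = m j i) ->
  (forall x, (forall i, x i \is Num.real) -> (exists2 i, (i < n)%N & x i != 0) -> 0 < qf n m x) ->
  forall k, (0 < k <= n)%N -> 0 < detf k m.
Proof.
elim: n m => [|n IH] m hn hr hs hpd k; first by case: k.
have ha : 0 < m 0%N 0%N.
  rewrite -(@qf_e0 _ n m) //; apply: hpd; first by case=> [|i]; rewrite ?rpred0 ?rpred1.
  by exists 0%N => //; rewrite oner_neq0.
have h0 : m 0%N 0%N != 0 by rewrite lt0r_neq0.
have hpd' : forall x, (forall i, x i \is Num.real) -> (exists2 i, (i < n)%N & x i != 0) ->
    0 < qf n (elimm m) x.
  move=> x hx [i hi hxi].
  pose y := fun i => if i is i'.+1 then x i' else
     - (\sum_(j <- iota 0 n) m 0%N j.+1 * x j) / m 0%N 0%N.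
  have := hpd y _ _.
  rewrite qf_dec // /y /=.
  have -> : forall z : F, - z / m 0%N 0%N + z / m 0%N 0%N = 0.
    by move=> z; rewrite mulNr addNr.
  rewrite expr0n /= mulr0 add0r; apply.
  - case=> [|j] //; rewrite rpredM ?rpredN ?rpredV ?rpred_sum //.
    by move=> j _; rewrite rpredM.
  - by exists i.+1.
case: k => [|[|k]] //; first by rewrite detf1.
move=> /andP [_ hkn].
have hk4 : (k.+1 <= 4)%N by rewrite -ltnS; apply: leq_trans hkn hn.
rewrite (detf_elim hk4 h0).
apply: mulr_gt0 => //; apply: IH => //.
- exact: ltnW.
- exact: elimm_real.
- exact: elimm_sym.
Qed.

Lemma L_real (C : numClosedFieldType) (p q r s t : C) :
  p \is Num.real -> q \is Num.real -> r \is Num.real ->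
  s \is Num.real -> t \is Num.real ->
  [/\ L3 p q \is Num.real, L2 p q r s \is Num.real & L1 p q r s t \is Num.real].
Proof.
move=> hp hq hr hs ht; rewrite /L3 /L2 /L1.
split; repeat first [assumption | apply: rpred_nat | apply: rpred1 | apply: rpredB | apply: rpredN
  | apply: rpredD | apply: rpredM | apply: rpredX | by rewrite rpredN rpred_nat].
Qed.

Unset Implicit Arguments.

Theorem mainTheorem1 (C : numClosedFieldType) (p q r s t : C) (alpha : 'I_5 -> C) :
  p \is Num.real -> q \is Num.real -> r \is Num.real ->
  s \is Num.real -> t \is Num.real ->
  quintic p q r s t = \prod_(i < 5) ('X - (alpha i)%:P) ->
  [/\ (injective alpha /\ (forall i, alpha i \is Num.real))
        <-> [/\ 0 < L3 p q, 0 < L2 p q r s, 0 < L1 p q r s t & 0 < discr5 alpha],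
      (injective alpha /\ nreal alpha = 3%N) <-> discr5 alpha < 0
    & (injective alpha /\ nreal alpha = 1%N)
        <-> 0 < discr5 alpha /\
            (L3 p q <= 0 \/ L2 p q r s <= 0 \/ L1 p q r s t <= 0)].
Proof.
move=> hp hq hr hs ht h.
have hc := conj_root hp hq hr hs ht h.
have [n0 _ _ _ _] := newton h.
have [d2 d3 d4] := detH h.
have hreal := pw_real hp hq hr hs ht h.
have hrm : forall i j, hank alpha i j \is Num.real by move=> i j; exact: hreal.
have hsm : forall i j, hank alpha i j = hank alpha j i by move=> i j; rewrite /hank PeanoNat.Nat.add_comm.
have [rL3 rL2 rL1] := L_real hp hq hr hs ht.
have Fpos : injective alpha -> (forall i, alpha i \is Num.real) ->
    [/\ 0 < L3 p q, 0 < L2 p q r s, 0 < L1 p q r s t & 0 < discr5 alpha].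
  move=> ha har.
  have hd := sylv_conv (n := 5) (m := hank alpha) isT hrm hsm (real_pd ha har).
  split.
  - have := hd 2%N isT; rewrite d2 pmulr_rgt0 //.
  - by have := hd 3%N isT; rewrite d3.
  - by have := hd 4%N isT; rewrite d4.
  - exact: allreal_discr.
have Fneg : injective alpha -> forall i0, alpha i0 \isn't Num.real ->
    ~ [/\ 0 < L3 p q, 0 < L2 p q r s, 0 < L1 p q r s t & 0 < discr5 alpha].
  move=> ha i0 hi0 [l3 l2 l1 dd].
  have [x hx hneg] := hermite_neg hp hq hr hs ht h ha hi0.
  have : 0 <= qf 5 (hank alpha) x.
    apply: sylv => //; case=> [|[|[|[|[|[|k]]]]]] // _.
    - by rewrite detf1 /hank /= n0 ltr0n.
    - by rewrite d2 mulr_gt0 // ltr0n.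
    - by rewrite d3.
    - by rewrite d4.
    - by rewrite detH5.
  by move=> hge; have := lt_le_trans hneg hge; rewrite ltxx.
have Fsign : injective alpha -> [/\ odd (nreal alpha), (nreal alpha <= 5)%N,
    (nreal alpha = 1%N -> 0 < discr5 alpha) & (nreal alpha = 3%N -> discr5 alpha < 0)].
  move=> ha; have [P hP eD] := discr_decomp hc ha.
  rewrite (nreal_sig hc ha); split.
  - exact: fix_odd.
  - by have := max_card [pred i | sig alpha i == i]; rewrite card_ord.
  - by move=> h1; rewrite eD Tfix1 // mul1r.
  - by move=> h3; rewrite eD pmulr_llt0 // Tfix3.
have nr135 : injective alpha -> [\/ nreal alpha = 1%N, nreal alpha = 3%N | nreal alpha = 5%N].
  move=> ha; have [ho hle _ _] := Fsign ha.
  by move: ho hle; case: (nreal alpha) => [|[|[|[|[|[|n]]]]]] //= _ _; [apply: Or31 | apply: Or32 | apply: Or33].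
split.
- split.
    by case=> ha har; exact: Fpos.
  move=> [l3 l2 l1 dd].
  have ha : injective alpha by apply: discr_inj; rewrite lt0r_neq0.
  split => // i; apply/negPn/negP => hi.
  by apply: (Fneg ha i hi).
- split.
    by case=> ha h3; have [_ _ _ ->] := Fsign ha.
  move=> dn.
  have ha : injective alpha by apply: discr_inj; rewrite ltr0_neq0.
  split => //; have [ho hle F1 F3] := Fsign ha.
  case: (nr135 ha) => // e.
  + by have := lt_trans dn (F1 e); rewrite ltxx.
  + by have := lt_trans dn (allreal_discr ha (nreal5 e)); rewrite ltxx.
- split.
    case=> ha h1; have [_ _ F1 _] := Fsign ha.
    split; first exact: F1.
    have [i0 hi0] : exists i0, alpha i0 \isn't Num.real.
      case: (boolP [forall i, alpha i \is Num.real]) => [/forallP hall | /forallPn [i0 hi0]].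
        by move: h1; rewrite allreal_nreal.
      by exists i0.
    have hn := Fneg ha i0 hi0.
    case: (boolP (0 < L3 p q)) => h3; last by left; rewrite real_leNgt ?rpred0.
    case: (boolP (0 < L2 p q r s)) => h2; last by right; left; rewrite real_leNgt ?rpred0.
    case: (boolP (0 < L1 p q r s t)) => h1'; last by right; right; rewrite real_leNgt ?rpred0.
    by exfalso; apply: hn; split => //; exact: F1.
  move=> [dd hl].
  have ha : injective alpha by apply: discr_inj; rewrite lt0r_neq0.
  split => //; have [ho hle F1 F3] := Fsign ha.
  case: (nr135 ha) => // e.
  + by have := lt_trans dd (F3 e); rewrite ltxx.
  + have [l3 l2 l1 _] := Fpos ha (nreal5 e).
    case: hl => [hl | [hl | hl]].
    * by have := le_lt_trans hl l3; rewrite ltxx.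
    * by have := le_lt_trans hl l2; rewrite ltxx.
    * by have := le_lt_trans hl l1; rewrite ltxx.
Qed.
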